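(* Let $n\ge1$ and $\pi\in\mathcal I^C_{2n}(321)$. Then $$\mathrm{Des}^+(\pi)=\{i\in [n] : i\in E_{\pi}\text{ and } i+1\notin E_{\pi}\}.$$ (In particular $n\in\mathrm{Des}^+(\pi)$ if and only if $n\in E_\pi$.)
   Context: $[n]=\{1,\dots,n\}$. A permutation $\pi\in\mathcal S_m$ is centrosymmetric if $\pi(i)+\pi(m+1-i)=m+1$ for all $i$; $\mathcal I^C_{m}(321)$ is the set of centrosymmetric involutions in $\mathcal S_m$ avoiding $321$. A descent of $\pi$ is a position $i$ with $\pi(i)>\pi(i+1)$; for $\pi\in\mathcal S_{2n}$, $\mathrm{Des}^+(\pi)$ is the set of descents lying in $[n]$. $E_\pi=\{i\in[n]:\pi(i)>i\}$ is the set of excedances of $\pi$ lying in $[n]$. *)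

(* Defs.v *)
From mathcomp Require Import all_boot all_order all_fingroup.
Set Implicit Arguments. Unset Strict Implicit. Unset Printing Implicit Defensive.

(* Permutations of [m] = {1..m} are represented by 'S_m (permutations of 'I_m = {0..m-1});
   pval p i is the 1-based value pi(i) for 1 <= i <= m. *)
Definition pval (m : nat) (p : 'S_m) (i : nat) : nat :=
  match m return 'S_m -> nat with
  | 0 => fun _ => 0
  | m'.+1 => fun q => (q (inord i.-1 : 'I_m'.+1)).+1
  end p.

Definition centrosymmetric (m : nat) (p : 'S_m) : Prop :=
  forall i, 1 <= i <= m -> pval p i + pval p (m.+1 - i) = m.+1.

Definition involution (m : nat) (p : 'S_m) : Prop := (p * p)%g = 1%g.

Definition avoids321 (m : nat) (p : 'S_m) : Prop :=
  ~ exists i j k : 'I_m, [/\ i < j, j < k & p k < p j < p i].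

Definition cent_inv_321 (m : nat) (p : 'S_m) : Prop :=
  [/\ centrosymmetric p, involution p & avoids321 p].

Definition DesPlus (n : nat) (p : 'S_(n.*2)) : pred nat :=
  fun i => (1 <= i <= n) && (pval p i.+1 < pval p i).

Definition Exc (n : nat) (p : 'S_(n.*2)) : pred nat :=
  fun i => (1 <= i <= n) && (i < pval p i).

(* Main.v *)
Require Import Defs.
From mathcomp Require Import all_boot all_order all_fingroup.
From mathcomp Require Import zify.
Set Implicit Arguments. Unset Strict Implicit.

Lemma cardC_lt m (t : nat) : t <= m -> #|[set x : 'I_m | x < t]| = t.
Proof.
move=> tm.
have -> : [set x : 'I_m | x < t] = [set widen_ord tm y | y : 'I_t].
  apply/setP => x; rewrite !inE; apply/idP/imsetP.
    by move=> xt; exists (Ordinal xt) => //; apply: val_inj.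
  by case=> y _ ->; rewrite /= ltn_ord.
rewrite card_imset ?card_ord //.
by move=> a b /(congr1 val) /= /val_inj.
Qed.

Lemma card_pre m (q : 'S_m) (t : nat) : t <= m ->
  #|[set x : 'I_m | q x < t]| = t.
Proof.
move=> tm; rewrite -[RHS](cardC_lt (m:=m) tm).
have -> : [set x : 'I_m | q x < t] = (q^-1)%g @: [set x : 'I_m | x < t].
  apply/setP => x; rewrite !inE; apply/idP/imsetP.
    by move=> h; exists (q x); rewrite ?inE // permK.
  by case=> y; rewrite inE => yt ->; rewrite permKV.
by rewrite card_imset //; apply: perm_inj.
Qed.

Lemma exc_lem m (q : 'S_m) (j k : 'I_m) : j < k -> k < q k -> q k < q j ->
  exists l : 'I_m, k < l /\ q l < q k.
Proof.
move=> jk kq qkj.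
case: (boolP [exists l : 'I_m, (k < l) && (q l < q k)]).
  by case/existsP => l /andP [] h1 h2; exists l.
rewrite negb_exists => /forallP Hl; exfalso.
have sub : [set x : 'I_m | q x < q k] \subset (([set x : 'I_m | x < k.+1] :\ j) :\ k).
  apply/subsetP => x; rewrite !inE => hx.
  have := Hl x; rewrite negb_and -leqNgt -leqNgt => hl.
  apply/and3P; split.
  - by apply/negP => /eqP E; subst x; rewrite ltnn in hx.
  - by apply/negP => /eqP E; subst x; lia.
  - by move: hl; case: (ltnP k x) => //= _ hh; lia.
have := subset_leq_card sub.
rewrite card_pre; last by apply: ltnW; apply: ltn_ord.
have c1 := cardsD1 k ([set x : 'I_m | x < k.+1] :\ j).
have c2 := cardsD1 j ([set x : 'I_m | x < k.+1]).
have kin : k \in [set x : 'I_m | x < k.+1] :\ j.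
  rewrite !inE ltnSn andbT; apply/negP => /eqP E; by rewrite E ltnn in jk.
have jin : j \in [set x : 'I_m | x < k.+1] by rewrite inE; lia.
rewrite kin in c1; rewrite jin cardC_lt in c2; last by apply: ltn_ord.
lia.
Qed.

Lemma nexc_lem m (q : 'S_m) (j k : 'I_m) : j < k -> q j <= j -> q k < q j ->
  exists l : 'I_m, l < j /\ q j < q l.
Proof.
move=> jk qj qkj.
case: (boolP [exists l : 'I_m, (l < j) && (q j < q l)]).
  by case/existsP => l /andP [] h1 h2; exists l.
rewrite negb_exists => /forallP Hl; exfalso.
have sub : ~: [set x : 'I_m | q x < (q j).+1] \subset ((~: [set x : 'I_m | x < j]) :\ j) :\ k.
  apply/subsetP => x; rewrite !inE -leqNgt => hx.
  have := Hl x; rewrite negb_and -leqNgt -leqNgt => hl.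
  apply/and3P; split.
  - by apply/negP => /eqP E; subst x; lia.
  - by apply/negP => /eqP E; subst x; lia.
  - by move: hl; case: (ltnP x j) => //= _ hh; lia.
have := subset_leq_card sub.
have c0 := cardsC [set x : 'I_m | q x < (q j).+1].
rewrite card_ord card_pre in c0; last by apply: ltn_ord.
have c1 := cardsD1 k ((~: [set x : 'I_m | x < j]) :\ j).
have c2 := cardsD1 j (~: [set x : 'I_m | x < j]).
have c3 := cardsC [set x : 'I_m | x < j].
rewrite card_ord cardC_lt in c3; last by apply: ltnW; apply: ltn_ord.
have kin : k \in (~: [set x : 'I_m | x < j]) :\ j.
  rewrite !inE -leqNgt (ltnW jk) andbT; apply/negP => /eqP E; by rewrite E ltnn in jk.
have jin : j \in ~: [set x : 'I_m | x < j] by rewrite !inE ltnn.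
rewrite kin in c1; rewrite jin in c2.
have := ltn_ord k; lia.
Qed.

Lemma core m (q : 'S_m) (j k : 'I_m) : avoids321 q -> val k = (val j).+1 ->
  (q k < q j) = (j < q j) && (q k <= k).
Proof.
move=> av Ek.
have jk : j < k by rewrite Ek.
have nq : q j != q k by apply/negP => /eqP /perm_inj E; subst; rewrite ltnn in jk.
case: (ltnP j (q j)) => hj; case: (ltnP k (q k)) => hk /=.
- apply/negP => h; have [l [kl ql]] := exc_lem jk hk h.
  by apply: av; exists j, k, l; rewrite jk kl ql h.
- move: nq; rewrite neq_ltn; case/orP => // h; move: h hk; rewrite Ek /=; lia.
- move: hk; rewrite Ek /=; lia.
- apply/negP => h; have [l [lj ql]] := nexc_lem jk hj h.
  by apply: av; exists l, j, k; rewrite lj jk ql h.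
Qed.

Theorem mainTheorem6 (n : nat) (p : 'S_(n.*2)) :
  1 <= n -> cent_inv_321 p ->
  forall i : nat,
    DesPlus p i = [&& 1 <= i <= n, Exc p i & ~~ Exc p i.+1].
Proof.
case: n p => [|n'] p // _ [cs _ av] i.
have E : forall t : nat, Defs.pval p t = (p (@inord (n'.*2).+1 t.-1)).+1 := fun t => erefl.
rewrite /DesPlus /Exc.
case: (boolP (1 <= i <= n'.+1)) => hi //=.
have hm : n'.+1.*2 = (n'.*2).+2 by [].
set j := @inord (n'.*2).+1 i.-1.
set k := @inord (n'.*2).+1 i.
have vj : val j = i.-1 by rewrite /j /= inordK //; lia.
have vk : val k = i by rewrite /k /= inordK //; lia.
have := core av (j := j) (k := k); rewrite vj vk => C.
have C' := C (ltac:(lia)).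
rewrite ltnS C'.
case: (ltnP i n'.+1) => hi2 /=.
  move: vj vk; rewrite /= => vj vk; rewrite vj vk ltnS -leqNgt.
  by congr (_ && _); apply/idP/idP; lia.
have ei : i = n'.+1 by lia.
have := cs n'.+1 (ltac:(lia)).
have -> : n'.+1.*2.+1 - n'.+1 = n'.+2 by lia.
rewrite !E /=.
have -> : @inord (n'.*2).+1 n'.+1 = k by rewrite /k ei.
have -> : @inord (n'.*2).+1 n' = j by rewrite /j ei.
move: vj vk; rewrite /= => vj vk; rewrite vj vk andbT => hc.
move: hc; set a := nat_of_ord (p j); set b := nat_of_ord (p k); move=> hc. rewrite -addnn in hc. apply/idP/idP; lia.
Qed.
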